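(* Fix $0<\epsilon<1$ and let $\lambda_n=\frac{1-\epsilon}{n}$. Then there exists a constant $\kappa'>0$ such that, with probability tending to $1$ as $n\to\infty$, every component of the random induced subgraph $\Gamma_n$ of $Q_2^n$ has at most $\kappa' n$ vertices.
   Context: $Q_2^n$ is the binary $n$-cube: vertex set $\mathbb{F}_2^n$, two vertices adjacent iff they differ in exactly one coordinate. $\Gamma_n$ is the subgraph of $Q_2^n$ induced by a random vertex set in which each vertex is included independently with probability $\lambda_n$. A component is a maximal connected induced subgraph. *)

(* Defs.v *)
From Stdlib Require Import Reals.
From mathcomp Require Import all_boot.
Set Implicit Arguments. Unset Strict Implicit. Unset Printing Implicit Defensive.

Definition cube (n : nat) : finType := {ffun 'I_n -> bool}.

Definition cube_adj (n : nat) : rel (cube n) :=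
  fun x y => #|[set i : 'I_n | x i != y i]| == 1%N.

Definition induced_adj (n : nat) (S : {set cube n}) : rel (cube n) :=
  fun x y => [&& x \in S, y \in S & cube_adj x y].

Definition component (n : nat) (S : {set cube n}) (x : cube n) : {set cube n} :=
  [set y | connect (induced_adj S) x y].

(* Probability that the random vertex set (each vertex kept independently with
   probability lam) satisfies P. *)
Definition prob (n : nat) (lam : R) (P : {set cube n} -> bool) : R :=
  \big[Rplus/R0]_(S : {set cube n} | P S)
     (Rmult (pow lam #|S|) (pow (Rminus R1 lam) #|~: S|)).

(* Main.v *)
Require Import Defs.
From HB Require Import structures.
From Stdlib Require Import Reals Lra Lia.
From mathcomp Require Import all_boot.
Set Implicit Arguments. Unset Strict Implicit. Unset Printing Implicit Defensive.

Lemma Rplus_assoc' : associative Rplus. Proof. by move=> *; rewrite Rplus_assoc. Qed.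
HB.instance Definition _ := Monoid.isComLaw.Build R R0 Rplus Rplus_assoc' Rplus_comm Rplus_0_l.

Definition wt (T : finType) (lam : R) (S : {set T}) : R :=
  Rmult (pow lam #|S|) (pow (Rminus R1 lam) #|~: S|).

Lemma disjU1r (T : finType) (v : T) (A B : {set T}) :
  [disjoint A & v |: B] = (v \notin A) && [disjoint A & B].
Proof.
by rewrite disjoints_subset setCU subsetI -!disjoints_subset disjoint_sym disjoints1.
Qed.

Lemma prod_lemma (T : finType) (lam : R) (k : nat) : forall A B : {set T},
  [disjoint A & B] -> #|~: (A :|: B)| = k ->
  \big[Rplus/R0]_(S : {set T} | (A \subset S) && [disjoint S & B]) wt lam S
   = Rmult (pow lam #|A|) (pow (Rminus R1 lam) #|B|).
Proof.
elim: k => [|k IH] A B dAB hk.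
- have hAB : A :|: B = setT.
    by apply/setP => y; have := card0_eq hk y; rewrite !inE; case: (_ || _).
  rewrite (big_pred1 A).
    rewrite /wt (_ : ~: A = B) //.
    apply/setP=> y; rewrite !inE; move/setP: hAB => /(_ y); rewrite !inE.
    move: dAB => /disjoint_setI0/setP/(_ y); rewrite !inE.
    by case: (y \in A); case: (y \in B).
  move=> S /=; apply/andP/eqP.
    case=> sAS dSB; apply/eqP; rewrite eqEsubset sAS andbT.
    apply/subsetP => y yS; move/setP: hAB => /(_ y); rewrite !inE.
    case/orP => // /[dup] yB.
    by move: dSB => /disjoint_setI0/setP/(_ y); rewrite !inE yS yB.
  by move=> ->; split => //; apply: subxx.
- have: #|~: (A :|: B)| > 0 by rewrite hk.
  case/card_gt0P => v; rewrite !inE negb_or => /andP [vA vB].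
  rewrite (bigID (fun S : {set T} => v \in S)) /=.
  have e1 : forall S : {set T}, ((A \subset S) && [disjoint S & B]) && (v \in S)
            = (v |: A \subset S) && [disjoint S & B].
    by move=> S; rewrite subUset sub1set; case: (v \in S); case: (A \subset S); case: [disjoint S & B].
  have e2 : forall S : {set T}, ((A \subset S) && [disjoint S & B]) && ~~(v \in S)
            = (A \subset S) && [disjoint S & v |: B].
    move=> S; rewrite [in RHS]disjoints_subset setCU subsetI -!disjoints_subset.
    rewrite (disjoint_sym S [set v]) disjoints1.
    by case: (v \in S); case: (A \subset S); case: [disjoint S & B].
  have hc : forall C : {set T}, C = ~: (A :|: B) :\ v -> #|C| = k.
    move=> C ->; apply/eqP; rewrite -eqSS -hk (cardsD1 v (~: (A :|: B))) !inE negb_or vA vB.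
    by [].
  rewrite (eq_bigl _ _ e1) (eq_bigl _ _ e2) !IH.
  - rewrite !cardsU1 (negbTE vA) (negbTE vB) /= /=.

    rewrite !add0n; set X := pow lam _; set Y := pow _ #|B|; ring.
  - by rewrite disjU1r vA.
  - apply: hc; apply/setP=> y; rewrite !inE; by case: (y == v); case: (y \in A); case: (y \in B).
  - by rewrite disjoint_sym disjU1r vB disjoint_sym.
  - apply: hc; apply/setP=> y; rewrite !inE; by case: (y == v); case: (y \in A); case: (y \in B).
Qed.
Definition bdry n (A : {set cube n}) : {set cube n} :=
  [set y | (y \notin A) && [exists a in A, cube_adj a y]].

Definition flip n (a : cube n) (i : 'I_n) : cube n :=
  [ffun j => if j == i then ~~ a j else a j].

Lemma adj_flip n (a y : cube n) : cube_adj a y -> exists i, y = flip a i.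
Proof.
rewrite /cube_adj => /cards1P [i hi]; exists i; apply/ffunP => j; rewrite ffunE.
move/setP: hi => /(_ j); rewrite !inE.
case ji: (j == i); first by case: (a j); case: (y j).
by move/negbT; rewrite negbK => /eqP.
Qed.

Lemma card_bdry n (A : {set cube n}) : #|bdry A| <= #|A| * n.
Proof.
have -> : #|A| * n = #|setX A [set: 'I_n]| by rewrite cardsX cardsT card_ord.
apply: leq_trans (leq_imset_card (fun p => flip p.1 p.2) _).
apply: subset_leq_card; apply/subsetP => y; rewrite inE => /andP [_ /existsP [a /andP [aA ay]]].
case: (adj_flip ay) => i ->; apply/imsetP; exists (a, i) => //.
by rewrite inE aA inE.
Qed.

Lemma closure_connect (T : finType) (e : rel T) (C : {set T}) x y :
  (forall u z, u \in C -> e u z -> z \in C) -> x \in C -> connect e x y -> y \in C.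
Proof.
move=> H xC /connectP [p pth ->]; elim: p x xC pth => //= z p IH x xC /andP [exz pth].
exact: IH (H _ _ xC exz) pth.
Qed.

Lemma connect_restrict (T : finType) (e e' : rel T) x :
  (forall y z, connect e x y -> e y z -> e' y z) -> forall y, connect e x y -> connect e' x y.
Proof.
move=> H y /connectP [p pth ->].
suff aux : forall u, connect e x u -> connect e' x u -> path e u p -> connect e' x (last u p).
  by apply: aux => //; exact: connect0.
elim: p {pth} => //= z p IH u h1 h2 /andP [euz pth].
apply: IH pth.
  by apply: connect_trans h1 (connect1 euz).
by apply: connect_trans h2 (connect1 (H _ _ h1 euz)).
Qed.

Lemma comp_char n (S0 : {set cube n}) (x : cube n) (S : {set cube n}) :
  x \in S0 ->
  ((x \in S) && (component S x == component S0 x)) =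
  ((component S0 x \subset S) && [disjoint S & bdry (component S0 x)]).
Proof.
move=> xS0; set A := component S0 x.
have xA : x \in A by rewrite inE connect0.
apply/andP/andP => [[xS /eqP <-]|[sAS dS]].
  have inS : forall y, y \in component S x -> y \in S.
    move=> y; rewrite inE; apply: closure_connect xS => u z _.
    by case/and3P.
  split; first by apply/subsetP => y /inS.
  rewrite disjoints_subset; apply/subsetP => y yS; rewrite in_setC; apply/negP.
  rewrite /bdry in_set => /andP [nyC /existsP [a /andP [aC ay]]].
  move/negP: nyC; apply.
  move: (aC); rewrite /component in_set => /connect_trans hx; rewrite in_set; apply: hx.
  by apply: connect1; rewrite /induced_adj (inS _ aC) yS ay.
split; first by move/subsetP: sAS; apply.
rewrite eqEsubset; apply/andP; split; apply/subsetP => y; rewrite inE.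
  apply: closure_connect xA => u z uA /and3P [_ zS uz].
  apply/negPn/negP => zA.
  have : z \in bdry A by rewrite inE zA /=; apply/existsP; exists u; rewrite uA.
  by rewrite (disjointFr dS zS).
rewrite /component in_set; apply: connect_restrict => u z hu euz.
have uA : u \in A by rewrite inE.
have zA : z \in A by rewrite inE; apply: connect_trans hu (connect1 euz).
case/and3P: euz => _ _ uz.
move/subsetP: sAS => sAS.
by rewrite /induced_adj (sAS _ uA) (sAS _ zA).
Qed.

Section RS. Local Open Scope R_scope.
Lemma alg (lam lam' r : R) (n a b K : nat) : 0 <= lam -> lam <= lam' -> lam' < 1 -> 0 < lam' ->
 r = (lam/lam') * ((1-lam)/(1-lam'))^n -> r <= 1 -> (K < a)%N -> (b <= a*n)%N ->
 lam^a*(1-lam)^b <= r^K * (lam'^a * (1-lam')^b).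
Proof.
move=> h0 h1 h2 h3 hr hr1 hKa hb.
set t := lam / lam' in hr *; set s := (1-lam)/(1-lam') in hr *.
have ht : lam = t * lam' by rewrite /t; field; lra.
have hs : 1 - lam = s * (1 - lam') by rewrite /s; field; lra.
have t0 : 0 <= t by rewrite /t; apply: Rmult_le_pos => //; apply: Rlt_le; apply: Rinv_0_lt_compat.
have s1 : 1 <= s.
  rewrite /s; apply: (Rmult_le_reg_r (1 - lam')); first lra.
  rewrite Rmult_1_l /Rdiv Rmult_assoc Rinv_l; lra.
have r0 : 0 <= r by rewrite hr; apply: Rmult_le_pos => //; apply: pow_le; lra.
have lp : 0 <= lam'^a * (1-lam')^b by apply: Rmult_le_pos; apply: pow_le; lra.
clearbody t s.
rewrite hs ht !Rpow_mult_distr.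
have e : t ^ a * lam' ^ a * (s ^ b * (1 - lam') ^ b) = (t^a * s^b) * (lam'^a * (1-lam')^b) by ring.
rewrite e; apply: Rmult_le_compat_r => //.
apply: Rle_trans (_ : t^a * s^(n*a) <= _).
  apply: Rmult_le_compat_l; first exact: pow_le.
  by apply: Rle_pow => //; apply/leP; rewrite mulnC.
rewrite pow_mult -Rpow_mult_distr -hr.
have -> : a = (K + (a - K))%N by rewrite subnKC // ltnW.
rewrite pow_add -{2}(Rmult_1_r (r ^ K)); apply: Rmult_le_compat_l; first exact: pow_le.
rewrite -(pow1 (a - K)); apply: pow_incr; lra.
Qed.

Lemma big_Rle (I : finType) (P : pred I) (F G : I -> R) :
  (forall i, P i -> F i <= G i) -> \big[Rplus/R0]_(i | P i) F i <= \big[Rplus/R0]_(i | P i) G i.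
Proof. move=> h; elim/big_rec2: _ => [|i x y Pi hxy]; [lra | apply: Rplus_le_compat; auto]. Qed.

Lemma big_Rpos (I : finType) (P : pred I) (F : I -> R) :
  (forall i, P i -> 0 <= F i) -> 0 <= \big[Rplus/R0]_(i | P i) F i.
Proof. move=> h; elim/big_rec: _ => [|i x Pi hx]; [lra | have := h i Pi; lra]. Qed.

Lemma big_Rmull (I : finType) (P : pred I) (F : I -> R) c :
  c * \big[Rplus/R0]_(i | P i) F i = \big[Rplus/R0]_(i | P i) (c * F i).
Proof. elim/big_rec2: _ => [|i x y Pi <-]; ring. Qed.

Lemma big_Rsub (I : finType) (P Q : pred I) (F : I -> R) :
  (forall i, P i -> Q i) -> (forall i, 0 <= F i) ->
  \big[Rplus/R0]_(i | P i) F i <= \big[Rplus/R0]_(i | Q i) F i.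
Proof.
move=> hPQ hF; rewrite [X in _ <= X](bigID P) /=.
rewrite (eq_bigl P) => [|i]; last by case Pi: (P i); rewrite ?andbT ?andbF //; rewrite hPQ.
have := @big_Rpos I (fun i => Q i && ~~ P i) F (fun i _ => hF i); lra.
Qed.

Lemma wt_pos (T : finType) lam (S : {set T}) : 0 <= lam <= 1 -> 0 <= wt lam S.
Proof. move=> h; rewrite /wt; apply: Rmult_le_pos; apply: pow_le; lra. Qed.

Lemma wt_total (T : finType) lam : \big[Rplus/R0]_(S : {set T}) wt lam S = 1.
Proof.
rewrite (eq_bigl (fun S : {set T} => (set0 \subset S) && [disjoint S & set0])).
  by rewrite (prod_lemma _ _ (erefl _)) ?cards0 /=; [ring | apply/pred0P => y /=; rewrite inE andbF].
by move=> S; rewrite sub0set /=; symmetry; apply/pred0P => y /=; rewrite inE andbF.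
Qed.

Lemma disj_bdry n (A : {set cube n}) : [disjoint A & bdry A].
Proof. by apply/pred0P => y /=; rewrite /bdry in_set; case: (y \in A). Qed.

Lemma px n (lam lam' r : R) (x : cube n) (K : nat) :
  0 <= lam -> lam <= lam' -> lam' < 1 -> 0 < lam' ->
  r = (lam/lam') * ((1-lam)/(1-lam'))^n -> r <= 1 ->
  \big[Rplus/R0]_(S : {set cube n} | (x \in S) && (K < #|component S x|)%N) wt lam S <= r^K.
Proof.
move=> h0 h1 h2 h3 hr hr1.
have r0 : 0 <= r.
  have i1 : 0 < / lam' by apply: Rinv_0_lt_compat.
  have i2 : 0 < / (1 - lam') by apply: Rinv_0_lt_compat; lra.
  rewrite hr /Rdiv; apply: Rmult_le_pos; first by apply: Rmult_le_pos; lra.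
  by apply: pow_le; apply: Rmult_le_pos; lra.
have wp : forall S : {set cube n}, 0 <= wt lam' S by move=> S; apply: wt_pos; lra.
rewrite (partition_big (fun S => component S x) predT) //=.
refine (Rle_trans _ (\big[Rplus/R0]_(A : {set cube n})
    (r^K * \big[Rplus/R0]_(S : {set cube n} | (x \in S) && (component S x == A)) wt lam' S)) _ _ _).
  apply: big_Rle => A _.
  case: (pickP (fun S0 : {set cube n} => (x \in S0) && (component S0 x == A))) => [S0 /andP [xS0 /eqP <-] | none].
  - set A0 := component S0 x.
    rewrite (eq_bigl _ _ (fun S => comp_char S xS0)).
    case hK: (K < #|A0|)%N.
    + have -> : \big[Rplus/R0]_(S : {set cube n} | ((x \in S) && (K < #|component S x|)%N) && (component S x == A0)) wt lam S
             = \big[Rplus/R0]_(S : {set cube n} | (A0 \subset S) && [disjoint S & bdry A0]) wt lam S.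
        apply: eq_bigl => S; rewrite -comp_char //.
        case e: (component S x == A0); last by rewrite !andbF.
        move/eqP: e => e; rewrite e !andbT; case: (x \in S) => //=.
      rewrite (@prod_lemma (cube n) lam _ A0 (bdry A0) (disj_bdry _) (erefl _)).
      rewrite (@prod_lemma (cube n) lam' _ A0 (bdry A0) (disj_bdry _) (erefl _)).
      by apply: alg hr hr1 hK (card_bdry _).
    + rewrite big_pred0; last first.
        move=> S; case e: (component S x == A0); last by rewrite !andbF.
        by rewrite (eqP e) hK andbF.
      by apply: Rmult_le_pos; [apply: pow_le | apply: big_Rpos].
  - rewrite big_pred0; last first.
      move=> S; move: (none S); case: (x \in S); case: (component S x == A) => //=.
      by rewrite andbF.
    by apply: Rmult_le_pos; [apply: pow_le | apply: big_Rpos].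
rewrite -big_Rmull -(@partition_big _ _ _ _ _ _ (fun S : {set cube n} => x \in S) (fun S => component S x) predT) //.
rewrite -{2}(Rmult_1_r (r ^ K)); apply: Rmult_le_compat_l; first exact: pow_le.
rewrite -(wt_total (cube n) lam'); exact: big_Rsub.
Qed.

Lemma pow_exp x n : exp x ^ n = exp (INR n * x).
Proof.
elim: n => [|k IH]; first by rewrite /= Rmult_0_l exp_0.
change (exp x ^ k.+1) with (exp x * exp x ^ k).
by rewrite IH S_INR -exp_plus; congr exp; ring.
Qed.

Lemma big_const_R (T : finType) c : \big[Rplus/R0]_(x : T) c = INR #|T| * c.
Proof.
rewrite big_const; elim: #|T| => [|k IH]; first by rewrite /=; ring.
by rewrite iterS IH S_INR; ring.
Qed.

Lemma INR_exp2 n : INR (expn 2 n) = 2 ^ n.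
Proof.
elim: n => [|k IH]; first by rewrite expn0.
by rewrite expnS -multE mult_INR IH /=.
Qed.

Lemma card_cube n : #|cube n| = expn 2 n.
Proof. by rewrite card_ffun card_bool card_ord. Qed.

Lemma bad_bound n (lam lam' r : R) (m : nat) :
  0 <= lam -> lam <= lam' -> lam' < 1 -> 0 < lam' ->
  r = (lam/lam') * ((1-lam)/(1-lam'))^n -> r <= 1 ->
  \big[Rplus/R0]_(S : {set cube n} |
     ~~ [forall x in S, Rle_dec (INR #|component S x|) (Rmult (INR m) (INR n)) : bool]) wt lam S
  <= 2 ^ n * r ^ (m * n).
Proof.
move=> h0 h1 h2 h3 hr hr1.
have wp : forall S : {set cube n}, 0 <= wt lam S by move=> S; apply: wt_pos; lra.
set E := fun (S : {set cube n}) (x : cube n) => (x \in S) && (m * n < #|component S x|)%N.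
apply: (@Rle_trans _ (\big[Rplus/R0]_(S : {set cube n}) \big[Rplus/R0]_(x | E S x) wt lam S)).
  eapply Rle_trans; last first.
    apply: big_Rsub => [S _ //| S]; apply: big_Rpos => y _; exact: wp.
  apply: big_Rle => S /forallPn [x]; rewrite negb_imply => /andP [xS hle].
  have Ex : E S x.
    rewrite /E xS /=; case: Rle_dec hle => // hnle _.
    apply/ltP; apply: INR_lt; rewrite -multE mult_INR; exact: Rnot_le_lt.
  rewrite (bigD1 x) //=.
  have := @big_Rpos _ (fun y => E S y && (y != x)) (fun _ => wt lam S) (fun _ _ => wp S); move=> hX; rewrite -{1}(Rplus_0_r (wt lam S)); exact: Rplus_le_compat_l.
rewrite (@exchange_big_dep _ _ _ _ _ _ _ predT (fun S x => E S x) predT (fun S _ => wt lam S)) //=.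
apply: (@Rle_trans _ (\big[Rplus/R0]_(x : cube n) r ^ (m * n))).
  apply: big_Rle => x _.
  exact: (px x (m * n) h0 h1 h2 h3 hr hr1).
rewrite big_const_R card_cube INR_exp2; lra.
Qed.

Lemma main_aux (eps : R) (heps0 : Rlt R0 eps) (heps1 : Rlt eps R1) :
  exists kappa : R, Rlt R0 kappa /\
    Un_cv (fun n : nat =>
             prob (Rdiv (Rminus R1 eps) (INR n))
               (fun S : {set cube n} =>
                  [forall x in S,
                     Rle_dec (INR #|component S x|) (Rmult kappa (INR n)) : bool]))
          R1.
Proof.
set q := (1 - eps) * exp eps.
have ee : exp (- eps) * exp eps = 1 by rewrite -exp_plus Rplus_opp_l exp_0.
have epos : 0 < exp eps by apply: exp_pos.
have q1 : q < 1.
  have h := exp_ineq1 (- eps) ltac:(lra).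
  rewrite /q -ee; apply: Rmult_lt_compat_r => //; lra.
have q0 : 0 < q by rewrite /q; apply: Rmult_lt_0_compat; lra.
set rho := (1 + q) / 2.
have rho1 : Rabs rho < 1 by rewrite Rabs_right /rho; lra.
have [M hM] := pow_lt_1_zero rho rho1 (1/4) ltac:(lra).
exists (INR M.+1); split; first by apply: lt_0_INR; apply/leP.
move=> d d0.
have [N2 hN2] := pow_lt_1_zero (1/2) ltac:(rewrite Rabs_right; lra) d d0.
set a := 1 / eps; set b := 2 / (1 - q).
have ha : a * eps = 1 by rewrite /a; field; lra.
have hb : b * (1 - q) = 2 by rewrite /b; field; lra.
have a0 : 0 < a by rewrite /a; apply: Rdiv_lt_0_compat; lra.
have b0 : 0 < b by rewrite /b; apply: Rdiv_lt_0_compat; lra.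
have [N1 hN1] := INR_unbounded (a + b + 1).
exists (N1 + N2)%coq_nat => n hn.
have hnN1 : INR N1 <= INR n by apply: le_INR; lia.
set Nn := INR n in hnN1 *.
have Nn0 : 0 < Nn by lra.
set u := / Nn; set v := / (Nn + 1).
have hu : u * Nn = 1 by rewrite /u; field; lra.
have hv : v * (Nn + 1) = 1 by rewrite /v; field; lra.
have u0 : 0 < u by apply: Rinv_0_lt_compat.
have v0 : 0 < v by apply: Rinv_0_lt_compat; lra.
set lam := (1 - eps) / Nn; set lam' := v.
have hlam : lam = (1 - eps) * u by [].
have l0 : 0 <= lam by rewrite hlam; apply: Rmult_le_pos; lra.
have epsN : 1 <= eps * Nn by nra.
have l1 : lam <= lam'.
  rewrite hlam /lam'.
  have : (1 - eps) * (Nn + 1) <= Nn by nra.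
  move=> h; have := Rmult_le_compat_r (u * v) _ _ ltac:(nra) h.
  have -> : (1 - eps) * (Nn + 1) * (u * v) = (1 - eps) * u * (v * (Nn + 1)) by ring.
  have -> : Nn * (u * v) = (u * Nn) * v by ring.
  rewrite hu hv; lra.
have l2 : lam' < 1 by rewrite /lam'; nra.
have l3 : 0 < lam' by [].
set r := lam / lam' * ((1 - lam) / (1 - lam')) ^ n.
have rrho : r <= rho.
  have e1 : lam / lam' = (1 - eps) * (1 + u).
    rewrite /lam /lam' /v /u; field; lra.
  have e2 : (1 - lam) / (1 - lam') = (1 - lam) * (1 + u).
    rewrite /lam /lam' /v /u; field; split; lra.
  have ex : ((1 - lam) * (1 + u)) ^ n <= exp eps.
    apply: Rle_trans (_ : (exp (- lam) * exp u) ^ n <= _).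
      apply: pow_incr; split; first by apply: Rmult_le_pos; lra.
      apply: Rmult_le_compat; try lra.
        have := exp_ineq1_le (- lam); lra.
      have := exp_ineq1_le u; lra.
    rewrite -exp_plus pow_exp; apply: Req_le; congr exp.
    rewrite hlam; have -> : Nn * (- ((1 - eps) * u) + u) = eps * (u * Nn) by ring.
    by rewrite hu Rmult_1_r.
  have hub : u * 2 <= 1 - q.
    have : u * b <= 1 by rewrite -hu; apply: Rmult_le_compat_l; lra.
    move=> h; have -> : u * 2 = u * b * (1 - q) by rewrite Rmult_assoc hb.
    have := Rmult_le_compat_r (1 - q) _ _ ltac:(lra) h; lra.
  rewrite /r e1 e2.
  apply: Rle_trans (_ : (1 - eps) * (1 + u) * exp eps <= _).
    apply: Rmult_le_compat_l => //; apply: Rmult_le_pos; lra.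
  have -> : (1 - eps) * (1 + u) * exp eps = q + q * u by rewrite /q; ring.
  rewrite /rho; nra.
have r0 : 0 <= r.
  rewrite /r /Rdiv; apply: Rmult_le_pos; first by apply: Rmult_le_pos; [lra | apply: Rlt_le; apply: Rinv_0_lt_compat].
  apply: pow_le; apply: Rmult_le_pos; [lra | apply: Rlt_le; apply: Rinv_0_lt_compat; lra].
have bad := bad_bound M.+1 l0 l1 l2 l3 (erefl r) ltac:(rewrite /rho in rrho; lra).
have tot := wt_total (cube n) lam.
rewrite (bigID (fun S : {set cube n} => [forall x in S, Rle_dec (INR #|component S x|) (Rmult (INR M.+1) (INR n)) : bool])) /= in tot.
change (Rdist (\big[Rplus/R0]_(S : {set cube n} | [forall x in S, Rle_dec (INR #|component S x|) (Rmult (INR M.+1) (INR n)) : bool]) wt lam S) 1 < d).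
set G := \big[Rplus/R0]_(S : {set cube n} | [forall x in S, _]) _ in tot *.
set B := \big[Rplus/R0]_(S : {set cube n} | ~~ _) _ in tot bad.
have B0 : 0 <= B by apply: big_Rpos => S _; apply: wt_pos; lra.
have hB : B <= (1/2) ^ n.
  apply: Rle_trans bad _.
  have rm : r ^ M.+1 <= 1/4.
    apply: Rle_trans (_ : rho ^ M.+1 <= 1/4).
      apply: pow_incr; lra.
    have := hM M.+1 ltac:(lia); rewrite Rabs_right; first lra.
    apply: Rle_ge; apply: pow_le; rewrite /rho; lra.
  rewrite pow_mult.
  have -> : (1/2) ^ n = 2 ^ n * (1/4) ^ n.
    by rewrite -Rpow_mult_distr; congr pow; field.
  apply: Rmult_le_compat_l; first by apply: pow_le; lra.
  apply: pow_incr; split => //; exact: pow_le.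
have := hN2 n ltac:(lia); rewrite Rabs_right; last by apply: Rle_ge; apply: pow_le; lra.
move=> h; unfold Rdist; rewrite Rabs_left1; lra.
Qed.

End RS.

Unset Implicit Arguments.
Theorem mainTheorem3 (eps : R) (heps0 : Rlt R0 eps) (heps1 : Rlt eps R1) :
  exists kappa : R, Rlt R0 kappa /\
    Un_cv (fun n : nat =>
             prob (Rdiv (Rminus R1 eps) (INR n))
               (fun S : {set cube n} =>
                  [forall x in S,
                     Rle_dec (INR #|component S x|) (Rmult kappa (INR n)) : bool]))
          R1.
Proof. exact: main_aux. Qed.
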